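(* Let $G$ and $H$ be connected nontrivial graphs, let $u,x\in V(G)$ and $v,y\in V(H)$. Then $(u,v)$ and $(x,y)$ are mutually maximally distant vertices in the strong product $G\boxtimes H$ if and only if one of the following conditions holds: (i) $u,x$ are mutually maximally distant in $G$ and $v,y$ are mutually maximally distant in $H$; (ii) $u,x$ are mutually maximally distant in $G$ and $v=y$; (iii) $v,y$ are mutually maximally distant in $H$ and $u=x$; (iv) $u,x$ are mutually maximally distant in $G$ and $d_G(u,x)>d_H(v,y)$; (v) $v,y$ are mutually maximally distant in $H$ and $d_G(u,x)<d_H(v,y)$.
   Context: All graphs are simple; $d_G$ denotes the shortest-path distance in $G$, and $N_G(u)$ the open neighborhood of $u$. A vertex $u$ is maximally distant from $v$ in $G$ if for every $w\in N_G(u)$, $d_G(v,w)\le d_G(u,v)$; $u$ and $v$ are mutually maximally distant if $u$ is maximally distant from $v$ and $v$ is maximally distant from $u$. The strong product $G\boxtimes H$ has vertex set $V(G)\times V(H)$, with $(a,b)$ and $(c,d)$ adjacent iff either ($a=c$ and $bd\in E(H)$), or ($ac\in E(G)$ and $b=d$), or ($ac\in E(G)$ and $bd\in E(H)$). A graph is nontrivial if it has at least two vertices. *)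

(* Defs.v *)
From mathcomp Require Import all_boot.
Set Implicit Arguments. Unset Strict Implicit. Unset Printing Implicit Defensive.

(* A simple graph on a finite vertex type T is a symmetric irreflexive
   relation e : rel T (hypotheses stated in the theorem). *)

Fixpoint within (T : finType) (e : rel T) (n : nat) (x y : T) : bool :=
  match n with
  | 0 => x == y
  | n'.+1 => (x == y) || [exists z, e x z && within e n' z y]
  end.

(* Shortest-path distance: the least n such that y is reachable from x by a
   walk of length <= n (for connected graphs such n < #|T| always exists). *)
Definition dist (T : finType) (e : rel T) (x y : T) : nat :=
  find (fun n => within e n x y) (iota 0 #|T|).

Definition connected_graph (T : finType) (e : rel T) : Prop :=
  forall x y : T, connect e x y.

Definition max_dist (T : finType) (e : rel T) (u v : T) : Prop :=
  forall w, e u w -> dist e v w <= dist e u v.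

Definition mutually_max_dist (T : finType) (e : rel T) (u v : T) : Prop :=
  max_dist e u v /\ max_dist e v u.

Definition strong_prod (T1 T2 : finType) (e1 : rel T1) (e2 : rel T2)
  : rel (T1 * T2) :=
  fun p q =>
    [|| (p.1 == q.1) && e2 p.2 q.2,
        e1 p.1 q.1 && (p.2 == q.2)
      | e1 p.1 q.1 && e2 p.2 q.2].

(* Main.v *)
Require Import Defs.
From mathcomp Require Import all_boot.

Section G.
Variables (T : finType) (e : rel T).

Lemma withinSE n x y : within e n.+1 x y = (x == y) || [exists z, e x z && within e n z y].
Proof. by []. Qed.

Lemma within_refl n x : within e n x x.
Proof. by case: n => [|n]; rewrite /= eqxx. Qed.

Lemma within_S n x y : within e n x y -> within e n.+1 x y.
Proof.
elim: n x => [|n IH] x; first by move=> /= ->.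
rewrite withinSE => /orP[/eqP->|/existsP[z /andP[exz wz]]]; first exact: within_refl.
rewrite withinSE; apply/orP; right; apply/existsP; exists z; rewrite exz /=; exact: IH.
Qed.

Lemma within_mono m n x y : m <= n -> within e m x y -> within e n x y.
Proof.
move=> /subnK <-; elim: (n - m) => // k IH w; rewrite addSn; exact: within_S (IH w).
Qed.

Lemma step1 n x y z : (x == z) || e x z -> within e n z y -> within e n.+1 x y.
Proof.
case/orP=> [/eqP-> | exz] w; first exact: within_S.
rewrite withinSE; apply/orP; right; apply/existsP; exists z; by rewrite exz.
Qed.

Arguments step1 [n x y] z.

Lemma within_snoc n y z x : within e n y z -> e z x -> within e n.+1 y x.
Proof.
elim: n y => [|n IH] y.
  move=> /eqP-> ezx; apply: (step1 x); by rewrite ?ezx ?orbT ?within_refl.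
rewrite withinSE => /orP[/eqP->|/existsP[w /andP[eyw wwz]]] ezx.
  apply: (step1 x); by rewrite ?ezx ?orbT ?within_refl.
apply: (step1 w); first by rewrite eyw orbT.
exact: IH.
Qed.

Lemma within_sym (sym : symmetric e) n x y : within e n x y -> within e n y x.
Proof.
elim: n x y => [|n IH] x y; first by rewrite /= eq_sym.
rewrite withinSE => /orP[/eqP->|/existsP[z /andP[exz wzy]]]; first exact: within_refl.
apply: within_snoc (IH _ _ wzy) _; by rewrite sym.
Qed.

Lemma dist_leE n0 x y : n0 < #|T| -> within e n0 x y ->
  (dist e x y < #|T|) /\ forall n, within e n x y = (dist e x y <= n).
Proof.
move=> lt0 w0.
have hasP : has (fun n => within e n x y) (iota 0 #|T|).
  by apply/hasP; exists n0; rewrite ?mem_iota.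
have ltd : dist e x y < #|T| by rewrite /dist -{2}(size_iota 0 #|T|) -has_find.
have wd : within e (dist e x y) x y.
  by have := nth_find 0 hasP; rewrite -/(dist e x y) nth_iota // add0n.
split=> // n; apply/idP/idP=> [wn|le]; last exact: within_mono le wd.
rewrite leqNgt; apply/negP=> ltn.
have := before_find 0 ltn; rewrite nth_iota ?add0n ?wn //; exact: ltn_trans ltn ltd.
Qed.

Lemma conn_within x y : connect e x y -> exists2 n, n < #|T| & within e n x y.
Proof.
move/connectP=> [p pth ->]; case: (shortenP pth) => p' pth' uq _.
exists (size p').
  change (size (x :: p') <= #|T|); rewrite -(card_uniqP uq); exact: max_card.
elim: p' x pth' {uq pth} => [|z p' IH] x.
  by move=> _; exact: within_refl.
move=> /= /andP[exz pz]; apply: (step1 z); [by rewrite exz orbT | exact: IH].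
Qed.

Arguments conn_within [x y].
Arguments dist_leE [n0 x y].
Hypothesis conn : connected_graph e.
Hypothesis sym : symmetric e.

Lemma distE x y n : within e n x y = (dist e x y <= n).
Proof. by have [n0 h w] := conn_within (conn x y); case: (dist_leE h w). Qed.

Lemma dist_lt x y : dist e x y < #|T|.
Proof. by have [n0 h w] := conn_within (conn x y); case: (dist_leE h w). Qed.

Lemma dist_self x : dist e x x = 0.
Proof. by apply/eqP; rewrite -leqn0 -distE within_refl. Qed.

Lemma dist_eq0 x y : dist e x y = 0 -> x = y.
Proof. by move=> h; have := leqnn 0; rewrite -{1}h -distE => /eqP. Qed.

Arguments dist_eq0 [x y].

Lemma dist_sym x y : dist e x y = dist e y x.
Proof.
by apply/eqP; rewrite eqn_leq -!distE; apply/andP; split; apply: within_sym => //;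
  rewrite distE.
Qed.

Lemma dist_edge x a b : e a b -> dist e x b <= (dist e x a).+1.
Proof.
move=> eab; rewrite -distE; apply: within_snoc eab; by rewrite distE.
Qed.

Lemma has_nb (nt : 1 < #|T|) u : exists w, e u w.
Proof.
have [t ntu] : exists t, t != u.
  case: (pickP (predC1 u)) => [t /= h|H]; first by exists t.
  move: nt; rewrite (@eq_card _ _ (pred1 u)) ?card1 // => t /=.
  by have := H t; rewrite /= => /negbFE /eqP ->; rewrite !inE eqxx.
case hd: (dist e u t) => [|k]; first by rewrite (dist_eq0 hd) eqxx in ntu.
have := leqnn k.+1; rewrite -{1}hd -distE withinSE eq_sym (negbTE ntu) /=.
by case/existsP=> z /andP[? _]; exists z.
Qed.

End G.

Arguments step1 [T e n x y] z.
Arguments distE [T e] conn x y n.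
Arguments dist_lt [T e] conn x y.
Arguments dist_self [T e] conn x.
Arguments dist_eq0 [T e] conn [x y] _.
Arguments dist_sym [T e] conn sym x y.
Arguments dist_edge [T e] conn x [a b] _.
Arguments has_nb [T e] conn nt u.

Section P.
Variables (T1 T2 : finType) (e1 : rel T1) (e2 : rel T2).
Notation P := (strong_prod e1 e2).

Lemma within_prod n (p q : T1 * T2) :
  within P n p q = within e1 n p.1 q.1 && within e2 n p.2 q.2.
Proof.
elim: n p => [|n IH] [a b]; first by case: q => c d; rewrite /= xpair_eqE.
apply/idP/idP.
  rewrite withinSE => /orP[/eqP->|/existsP[[z1 z2] /andP[Pz wz]]].
    by rewrite !within_refl.
  rewrite IH /= in wz; case/andP: wz => w1 w2.
  have [c1 c2] : ((a == z1) || e1 a z1) /\ ((b == z2) || e2 b z2).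
    by move: Pz; rewrite /strong_prod /= => /or3P[] /andP[-> ->]; rewrite ?orbT.
  by apply/andP; split; [exact: step1 c1 w1 | exact: step1 c2 w2].
case/andP=> H1 H2; rewrite withinSE in H1; rewrite withinSE in H2; move: H1 H2.
case/orP=> [/eqP h1|/existsP[z1 /andP[ez1 w1]]];
  case/orP=> [/eqP h2|/existsP[z2 /andP[ez2 w2]]].
- simpl in h1, h2; have -> : q = (a, b) by case: q h1 h2 {IH} => c d /= -> ->.
  exact: within_refl.
- simpl in h1, ez2; apply: (step1 (q.1, z2)); first by rewrite /strong_prod /= h1 eqxx ez2 !orbT.
  by rewrite IH /= within_refl ?andbT ?w1 ?w2.
- simpl in h2, ez1; apply: (step1 (z1, q.2)); first by rewrite /strong_prod /= h2 eqxx ez1 !orbT.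
  by rewrite IH /= within_refl ?andbT ?w1 ?w2.
- simpl in ez1, ez2; apply: (step1 (z1, z2)); first by rewrite /strong_prod /= ez1 ez2 !orbT.
  by rewrite IH /= w1 w2.
Qed.

Hypotheses (conn1 : connected_graph e1) (conn2 : connected_graph e2).

Lemma distP a b c d : dist P (a, b) (c, d) = maxn (dist e1 a c) (dist e2 b d).
Proof.
set m := maxn _ _.
have w0 : within P m (a, b) (c, d).
  by rewrite within_prod /= !distE // ?leq_maxl ?leq_maxr.
have lt0 : m < #|{: T1 * T2}|.
  rewrite card_prod gtn_max; apply/andP; split.
    apply: leq_trans (dist_lt conn1 a c) _; apply: leq_pmulr.
    by apply/card_gt0P; exists b.
  apply: leq_trans (dist_lt conn2 b d) _; apply: leq_pmull.
  by apply/card_gt0P; exists a.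
have [_ E] := @dist_leE _ _ _ _ _ lt0 w0.
have G n : (dist P (a, b) (c, d) <= n) = (m <= n).
  by rewrite -E within_prod /= !distE // geq_max.
by apply/eqP; rewrite eqn_leq G leqnn -G leqnn.
Qed.

End P.

Lemma key (T1 T2 : finType) (e1 : rel T1) (e2 : rel T2)
  (sym1 : symmetric e1) (sym2 : symmetric e2)
  (conn1 : connected_graph e1) (conn2 : connected_graph e2) u x v y :
  max_dist (strong_prod e1 e2) (u, v) (x, y) <->
  ((dist e2 v y <= dist e1 u x -> max_dist e1 u x) /\
   (dist e1 u x <= dist e2 v y -> max_dist e2 v y)).
Proof.
have dP a b c d : dist (strong_prod e1 e2) (a, b) (c, d)
    = maxn (dist e1 a c) (dist e2 b d) by exact: distP.
rewrite /max_dist; split.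
- move=> H; split=> hle.
  + move=> a eua; have := H (a, v); rewrite /strong_prod /= eua eqxx orbT => /(_ isT).
    by rewrite !dP geq_max (maxn_idPl hle) => /andP[h _].
  + move=> b evb; have := H (u, b); rewrite /strong_prod /= evb eqxx /= => /(_ isT).
    by rewrite !dP geq_max (maxn_idPr hle) => /andP[_ h].
- case=> C1 C2 [a b] Pw; rewrite !dP geq_max.
  have B1 a' : (u == a') || e1 u a' -> dist e1 x a' <= maxn (dist e1 u x) (dist e2 v y).
    case/orP=> [/eqP<-|eua]; first by rewrite (dist_sym conn1 sym1) leq_maxl.
    case: (leqP (dist e2 v y) (dist e1 u x)) => h.
      exact: C1 h a' eua.
    apply: leq_trans (dist_edge conn1 x eua) _.
    by rewrite (dist_sym conn1 sym1).
  have B2 b' : (v == b') || e2 v b' -> dist e2 y b' <= maxn (dist e1 u x) (dist e2 v y).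
    case/orP=> [/eqP<-|evb]; first by rewrite (dist_sym conn2 sym2) leq_maxr.
    case: (leqP (dist e1 u x) (dist e2 v y)) => h.
      exact: C2 h b' evb.
    apply: leq_trans (dist_edge conn2 y evb) _.
    by rewrite (dist_sym conn2 sym2).
  have [c1 c2] : ((u == a) || e1 u a) /\ ((v == b) || e2 v b).
    by move: Pw; rewrite /strong_prod /= => /or3P[] /andP[-> ->]; rewrite ?orbT.
  by rewrite B1 ?B2.
Qed.

Theorem lemma6 (T1 T2 : finType) (e1 : rel T1) (e2 : rel T2)
  (sym1 : symmetric e1) (irr1 : irreflexive e1)
  (sym2 : symmetric e2) (irr2 : irreflexive e2)
  (conn1 : connected_graph e1) (conn2 : connected_graph e2)
  (nt1 : 1 < #|T1|) (nt2 : 1 < #|T2|)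
  (u x : T1) (v y : T2) :
  mutually_max_dist (strong_prod e1 e2) (u, v) (x, y) <->
  (mutually_max_dist e1 u x /\ mutually_max_dist e2 v y) \/
  (mutually_max_dist e1 u x /\ v = y) \/
  (mutually_max_dist e2 v y /\ u = x) \/
  (mutually_max_dist e1 u x /\ dist e2 v y < dist e1 u x) \/
  (mutually_max_dist e2 v y /\ dist e1 u x < dist e2 v y).
Proof.
have K1 := @key _ _ _ _ sym1 sym2 conn1 conn2 u x v y.
have K2 := @key _ _ _ _ sym1 sym2 conn1 conn2 x u y v.
rewrite (dist_sym conn1 sym1 x u) (dist_sym conn2 sym2 y v) in K2.
have NS1 z : ~ max_dist e1 z z.
  move=> H; have [w ezw] := has_nb conn1 nt1 z; have := H w ezw.
  rewrite (dist_self conn1) leqn0 => /eqP/(dist_eq0 conn1) zw.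
  by rewrite zw irr1 in ezw.
have NS2 z : ~ max_dist e2 z z.
  move=> H; have [w ezw] := has_nb conn2 nt2 z; have := H w ezw.
  rewrite (dist_self conn2) leqn0 => /eqP/(dist_eq0 conn2) zw.
  by rewrite zw irr2 in ezw.
rewrite /mutually_max_dist.
have D10 : u = x -> dist e1 u x = 0 by move=> ->; rewrite (dist_self conn1).
have D20 : v = y -> dist e2 v y = 0 by move=> ->; rewrite (dist_self conn2).
have D10' : dist e1 u x = 0 -> u = x by apply: dist_eq0.
have D20' : dist e2 v y = 0 -> v = y by apply: dist_eq0.
move: K1 K2 D10 D20 D10' D20'.
set D1 := dist e1 u x; set D2 := dist e2 v y => K1 K2 D10 D20 D10' D20'.
case: (ltngtP D1 D2) => h.
- split.
  + case=> /K1[_ A] /K2[_ B]; do 4 right.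
    by split; [split; [exact: A (ltnW h) | exact: B (ltnW h)] | done].
  + move=> R; have [A B] : max_dist e2 v y /\ max_dist e2 y v.
      case: R => [[_ M]|[[_ vy]|[[M _]|[[_ lt]|[M _]]]]] //.
      by move: h; rewrite (D20 vy).
    split; [apply/K1 | apply/K2]; split=> hle //; by move: h; rewrite ltnNge hle.
- split.
  + case=> /K1[A _] /K2[B _]; do 3 right; left.
    by split; [split; [exact: A (ltnW h) | exact: B (ltnW h)] | done].
  + move=> R; have [A B] : max_dist e1 u x /\ max_dist e1 x u.
      case: R => [[M _]|[[M _]|[[_ ux]|[[M _]|[_ lt]]]]] //.
      by move: h; rewrite (D10 ux).
    split; [apply/K1 | apply/K2]; split=> hle //; by move: h; rewrite ltnNge hle.
- have l1 : D2 <= D1 by rewrite h.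
  have l2 : D1 <= D2 by rewrite h.
  split.
  + case=> /K1[A B] /K2[C D]; left.
    by split; split; [exact: A l1 | exact: C l1 | exact: B l2 | exact: D l2].
  + move=> R; have [[A C] [B D]] : mutually_max_dist e1 u x /\ mutually_max_dist e2 v y.
      case: R => [//|[[M vy]|[[M ux]|[[_ lt]|[_ lt]]]]].
      * exfalso; have ux : u = x by apply: D10'; rewrite h D20.
        by case: M; rewrite ux => M _; exact: NS1 M.
      * exfalso; have vy : v = y by apply: D20'; rewrite -h D10.
        by case: M; rewrite vy => M _; exact: NS2 M.
      * by [].
      * by [].
    by split; [apply/K1 | apply/K2]; split=> _.
Qed.
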